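(* Let $\mathcal C$ be the epireflective subcategory of $\mathbf{Top}$ defined by any one of the separation axioms $T_0$, $T_1$, $T_2$, functionally Hausdorff, and let $\mathbf{TopMlt}$ be the category of topological Mal'tsev spaces. Then $\mathrm{r}_{\mathcal C}(\mathbf{TopMlt})$ is an epireflective subcategory of $\mathbf{TopMlt}$; in particular, for every topological Mal'tsev space $(X,\Phi)$, the reflection $\mathrm{r}_{\mathcal C}X$ is a topological Mal'tsev space with the operation $\mathrm{r}_{\mathcal C}(\Phi)$ determined by $\mathrm{r}_{\mathcal C}(\Phi)(\mathrm{r}_{(X,\mathcal C)}(x),\mathrm{r}_{(X,\mathcal C)}(y),\mathrm{r}_{(X,\mathcal C)}(z))=\mathrm{r}_{(X,\mathcal C)}(\Phi(x,y,z))$.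
   Context: A Mal'tsev operation on a space $X$ is a map $\Phi\colon X^3\to X$ with $\Phi(x,x,y)=\Phi(y,x,x)=y$ for all $x,y$; a topological Mal'tsev space is a space with a continuous Mal'tsev operation, and morphisms in $\mathbf{TopMlt}$ are continuous maps preserving the operation. For an epireflective subcategory $\mathcal C$ of $\mathbf{Top}$ (full, isomorphism-closed, closed under products and subspaces), $\mathrm{r}_{\mathcal C}X$ is the reflection of $X$ with universal continuous surjection $\mathrm{r}_{(X,\mathcal C)}\colon X\to\mathrm{r}_{\mathcal C}X$. A space is functionally Hausdorff if distinct points are separated by a real-valued continuous function. *)

(* Defs.v *)
From HB Require Import structures.
From mathcomp Require Import all_boot all_order all_algebra.
From mathcomp Require Import all_classical all_reals topology.
From mathcomp Require Import Rstruct Rstruct_topology.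
Set Implicit Arguments. Unset Strict Implicit. Unset Printing Implicit Defensive.

Inductive sep_axiom := T0 | T1 | T2 | FunHausdorff.

Definition functionally_hausdorff (X : topologicalType) : Prop :=
  forall x y : X, x <> y ->
    exists f : X -> Rdefinitions.R, continuous f /\ f x <> f y.

Definition in_C (s : sep_axiom) (X : topologicalType) : Prop :=
  match s with
  | T0 => kolmogorov_space X
  | T1 => accessible_space X
  | T2 => hausdorff_space X
  | FunHausdorff => functionally_hausdorff X
  end.

Definition maltsev_op (X : Type) (P : X -> X -> X -> X) : Prop :=
  forall x y : X, P x x y = y /\ P y x x = y.

Definition top_maltsev (X : topologicalType) (P : X -> X -> X -> X) : Prop :=
  maltsev_op P /\ continuous (fun p : X * X * X => P p.1.1 p.1.2 p.2).

Definition maltsev_morph (X Y : topologicalType) (P : X -> X -> X -> X)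
  (Q : Y -> Y -> Y -> Y) (f : X -> Y) : Prop :=
  continuous f /\ forall x y z, f (P x y z) = Q (f x) (f y) (f z).

Definition top_reflection (s : sep_axiom) (X R : topologicalType) (r : X -> R)
  : Prop :=
  [/\ in_C s R, continuous r, (forall y : R, exists x, r x = y) &
      forall (Y : topologicalType) (f : X -> Y), in_C s Y -> continuous f ->
        exists! g : R -> Y, continuous g /\ (forall x, g (r x) = f x)].

Definition maltsev_reflection (s : sep_axiom) (X R : topologicalType)
  (P : X -> X -> X -> X) (Q : R -> R -> R -> R) (r : X -> R) : Prop :=
  [/\ in_C s R, top_maltsev Q, maltsev_morph P Q r &
      forall (Y : topologicalType) (PY : Y -> Y -> Y -> Y) (f : X -> Y),
        in_C s Y -> top_maltsev PY -> maltsev_morph P PY f ->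
        exists! g : R -> Y, maltsev_morph Q PY g /\ (forall x, g (r x) = f x)].

(* Main.v *)
Require Import Defs.
From HB Require Import structures.
From mathcomp Require Import all_boot all_order all_algebra.
From mathcomp Require Import all_classical all_reals topology.
From mathcomp Require Import Rstruct Rstruct_topology.
Local Open Scope classical_set_scope.

Section QT.
Context {X R : topologicalType} (r : X -> R).
Definition qtop (_ : X -> R) : Type := R.
HB.instance Definition _ := Choice.on (qtop r).
Definition qopen (U : set (qtop r)) := open (r @^-1` U).
Program Definition qmix := @isOpenTopological.Build (qtop r) qopen _ _ _.
Next Obligation. by rewrite /qopen preimage_setT; exact: openT. Qed.
Next Obligation. by move=> ? ? ? ?; exact: openI. Qed.
Next Obligation. by move=> I f ofi; apply: bigcup_open => i _; exact: ofi. Qed.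
HB.instance Definition _ := qmix.

Lemma qopenE (U : set (qtop r)) : open U = open (r @^-1` U).
Proof. by []. Qed.

Hypothesis rc : continuous r.

Lemma open_fine (A : set R) : open A -> open (A : set (qtop r)).
Proof. by move=> oA; rewrite qopenE; move/continuousP: rc; apply. Qed.

Lemma nbhs_fine (x : R) (A : set R) : nbhs x A -> nbhs (x : (qtop r)) A.
Proof.
rewrite nbhsE => -[B [oB Bx] BA]; rewrite nbhsE; exists B => //.
split => //; exact: open_fine.
Qed.

Lemma id_cont : continuous (fun x : (qtop r) => (x : R)).
Proof. by apply/continuousP => A oA; exact: open_fine. Qed.

Lemma inC_fine s : in_C s R -> in_C s (qtop r).
Proof.
case: s => /=.
- move=> h x y /h [A [[HA HB]|[HA HB]]]; exists A.
    by left; split => //; rewrite inE; apply: nbhs_fine; rewrite -inE.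
  by right; split => //; rewrite inE; apply: nbhs_fine; rewrite -inE.
- move=> h x y /h [A [oA HA HB]]; exists A; split => //; exact: open_fine.
- move=> h p q cl; apply: h => A B nA nB; apply: cl; exact: nbhs_fine.
- move=> h x y /h [f [cf fxy]]; exists f; split => //.
  by apply/continuousP => A oA; apply: open_fine; move/continuousP: cf; apply.
Qed.
End QT.

Lemma nbhs3 (X : topologicalType) (x y z : X) (W : set (X * X * X)) :
  nbhs ((x, y), z) W -> exists A1 A2 A3, [/\ nbhs x A1, nbhs y A2, nbhs z A3 &
   forall a b c, A1 a -> A2 b -> A3 c -> W ((a, b), c)].
Proof.
case=> [[A B]] /= [[[A1 A2]] /= [HA1 HA2] sA HB] sW.
exists A1, A2, B; split => // a b c ? ? ?; apply: sW; split => //=; exact: sA.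
Qed.

Lemma nbhs3' (X : topologicalType) (x y z : X) (W : set (X * X * X)) A1 A2 A3 :
  nbhs x A1 -> nbhs y A2 -> nbhs z A3 ->
  (forall a b c, A1 a -> A2 b -> A3 c -> W ((a, b), c)) -> nbhs ((x, y), z) W.
Proof.
move=> h1 h2 h3 hW; exists (A1 `*` A2, A3) => /=.
  by split => //; exists (A1, A2).
by case=> [[a b] c] /= [[/= ? ?] ?]; apply: hW.
Qed.

Section Main.
Context (X : topologicalType) (P : X -> X -> X -> X).
Hypothesis Pc : continuous (fun p : X * X * X => P p.1.1 p.1.2 p.2).

Lemma sec1 y z : continuous (fun x => P x y z).
Proof.
move=> x W HW; have /nbhs3 [A1 [A2 [A3 [h1 h2 h3 hA]]]] := Pc ((x, y), z) W HW.
apply: filterS h1 => a Aa; apply: (hA a y z Aa); exact: nbhs_singleton.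
Qed.
Lemma sec2 x z : continuous (fun y => P x y z).
Proof.
move=> y W HW; have /nbhs3 [A1 [A2 [A3 [h1 h2 h3 hA]]]] := Pc ((x, y), z) W HW.
apply: filterS h2 => a Aa; apply: (hA x a z) => //; exact: nbhs_singleton.
Qed.
Lemma sec3 x y : continuous (fun z => P x y z).
Proof.
move=> z W HW; have /nbhs3 [A1 [A2 [A3 [h1 h2 h3 hA]]]] := Pc ((x, y), z) W HW.
apply: filterS h3 => a Aa; apply: (hA x y a) => //; exact: nbhs_singleton.
Qed.
End Main.

Theorem theorem4p11 (s : sep_axiom) (X : topologicalType)
  (P : X -> X -> X -> X) (R : topologicalType) (r : X -> R) :
  top_maltsev P -> top_reflection s r ->
  exists Q : R -> R -> R -> R,
    (forall x y z, Q (r x) (r y) (r z) = r (P x y z)) /\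
    maltsev_reflection s P Q r.
Proof.
move=> [Pm Pc] [RC rc rsurj runiv].
have fact (f : X -> X) : continuous f -> forall x x', r x = r x' -> r (f x) = r (f x').
  move=> fc x x' e.
  have [g [[gc gr] _]] := runiv R (r \o f) RC
     (fun x => continuous_comp (fc x) (rc (f x))).
  by have := gr x; have := gr x'; rewrite /= e => <- <-.
have wd x x' y y' z z' : r x = r x' -> r y = r y' -> r z = r z' ->
    r (P x y z) = r (P x' y' z').
  move=> ex ey ez.
  rewrite (fact _ (@sec1 _ _ Pc y z) _ _ ex) (fact _ (@sec2 _ _ Pc x' z) _ _ ey).
  exact: (fact _ (@sec3 _ _ Pc x' y') _ _ ez).
have [sc Hsc] : exists sc : R -> X, forall a, r (sc a) = a.
  by have [sc0 Hsc0] := boolp.choice rsurj; exists sc0.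
pose Q a b c := r (P (sc a) (sc b) (sc c)).
have Qr x y z : Q (r x) (r y) (r z) = r (P x y z) by apply: wd; rewrite Hsc.
have coarse (A : set R) : open (r @^-1` A) -> open A.
  move=> oA.
  have [g [[gc gr] _]] := runiv (qtop r) (r : X -> qtop r) (@inC_fine _ _ r rc _ RC)
     (ltac:(by apply/continuousP)).
  have gid a : g a = a by have [x <-] := rsurj a; rewrite gr.
  have := (proj1 (continuousP _) gc A oA).
  by rewrite (_ : g @^-1` A = A) //; apply/funext => a /=; rewrite gid.
have ropen (U : set X) : open U -> open (r @` U).
  move=> oU; apply: coarse; rewrite openE => t [u Uu eu].
  rewrite /interior.
  have hU : nbhs (P t t u) U by rewrite (proj1 (Pm t u)); exact: open_nbhs_nbhs.
  have /nbhs3 [A1 [A2 [A3 [h1 h2 h3 hA]]]] := Pc ((t, t), u) U hU.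
  apply: filterS (filterI h1 h2) => a [A1a A2a].
  exists (P a t u); first by apply: hA => //; exact: nbhs_singleton.
  by transitivity (r (P a u u)); [apply: wd | rewrite (proj2 (Pm u a))].
have Qc : continuous (fun p : R * R * R => Q p.1.1 p.1.2 p.2).
  case=> [[a b] c] W /= HW.
  have := Pc ((sc a, sc b), sc c) _ (rc _ _ HW).
  move/nbhs3 => [A1 [A2 [A3 [h1 h2 h3 hA]]]].
  have nE (T : topologicalType) (p : T) B : nbhs p B -> exists2 C, open_nbhs p C & C `<=` B.
    by rewrite nbhsE.
  move: h1 h2 h3 => /nE [U1 [oU1 U1x] s1] /nE [U2 [oU2 U2x] s2] /nE [U3 [oU3 U3x] s3].
  apply: (@nbhs3' _ a b c _ (r @` U1) (r @` U2) (r @` U3)).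
  - by apply: open_nbhs_nbhs; split; [exact: ropen | exists (sc a)].
  - by apply: open_nbhs_nbhs; split; [exact: ropen | exists (sc b)].
  - by apply: open_nbhs_nbhs; split; [exact: ropen | exists (sc c)].
  move=> _ _ _ [x Ux <-] [y Uy <-] [z Uz <-] /=.
  rewrite Qr; apply: hA; [exact: s1 | exact: s2 | exact: s3].
exists Q; split => //; split => //.
- split => // a b; have [x <-] := rsurj a; have [y <-] := rsurj b.
  by rewrite !Qr (proj1 (Pm x y)) (proj2 (Pm x y)).
- by split => // x y z; rewrite Qr.
move=> Y PY f YC [PYm PYc] [fc fP].
have [g [[gc gr] gu]] := runiv Y f YC fc.
exists g; split.
  split => //; split => // a b c.
  have [x <-] := rsurj a; have [y <-] := rsurj b; have [z <-] := rsurj c.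
  by rewrite Qr !gr fP.
by move=> g' [[g'c _] g'r]; apply: gu.
Qed.
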